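(* Let $M\in\mathbb{T}^{n\times n}$ and $q\in\mathbb{T}^n$ be such that no column of $M$ is the all-$(-\infty)$ vector and no entry of $q$ equals $-\infty$, and let $G=(V,E)$ be the associated colored bipartite multigraph. If $F\subset E$ is a perfect matching of $G$ containing at least one red edge, then $\alpha(F)$ is a solution of the TNECP instance $(M,q)$. Moreover, if the instance is nondegenerate, every solution of the TNECP instance is of the form $\alpha(F)$ for such a perfect matching $F$.
   Context: $\mathbb{T}=\mathbb{R}\cup\{-\infty\}$, $\oplus=\max$, $\odot=+$; convention $a-(-\infty)=+\infty$. TNECP instance $(M,q)$: find $(w,z)\in\mathbb{T}^n\times\mathbb{T}^n$ with $w\oplus M\odot z=q$, $\max_i(w_i+z_i)=-\infty$, and $z$ not the all-$(-\infty)$ vector. It is nondegenerate if for each $j$ the minimum $\min_k(q_k-M_{kj})$ is attained by exactly one $k$. The graph $G$ has row nodes $u_1,\dots,u_n$, column nodes $v_1,\dots,v_n$, a blue edge $u_iv_i$ for every $i$, and a red edge $u_iv_j$ whenever $q_i-M_{ij}=\min_k(q_k-M_{kj})$. For $F\subset E$, $\alpha(F)=(w,z)$ with $w_i=q_i$ if the blue edge $u_iv_i\in F$ and $-\infty$ otherwise, and $z_j=q_i-M_{ij}$ if a red edge $u_iv_j\in F$ and $-\infty$ otherwise. *)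

(* Defs.v *)
From HB Require Import structures.
From mathcomp Require Import all_boot all_order all_algebra.
From mathcomp Require Import constructive_ereal.
Set Implicit Arguments. Unset Strict Implicit. Unset Printing Implicit Defensive.
Import Order.TTheory GRing.Theory Num.Theory.
Local Open Scope ring_scope.

Section Trop.
Variable R : realFieldType.

(* Tropical numbers T = R ∪ {-oo}: None stands for -oo. *)
Definition trop := option R.

Definition tmax (a b : trop) : trop :=
  match a, b with
  | None, _ => b
  | _, None => a
  | Some x, Some y => Some (Num.max x y)
  end.

Definition tmul (a b : trop) : trop :=
  match a, b with
  | Some x, Some y => Some (x + y)
  | _, _ => None
  end.

(* difference a - b with values in R ∪ {±oo}, with a - (-oo) = +oo *)
Definition tdiff (a b : trop) : \bar R :=
  match b with
  | None => +oo%E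
  | Some y => match a with None => -oo%E | Some x => (x - y)%:E end
  end.

(* difference as a tropical number (used for z_j, where the red edge
   guarantees both arguments are finite) *)
Definition tsub (a b : trop) : trop :=
  match a, b with
  | Some x, Some y => Some (x - y)
  | _, _ => None
  end.

Variable n : nat.
Variables (M : 'I_n -> 'I_n -> trop) (q : 'I_n -> trop).

Definition tmatvec (z : 'I_n -> trop) (i : 'I_n) : trop :=
  \big[tmax/None]_(j < n) tmul (M i j) (z j).

Definition is_solution (w z : 'I_n -> trop) : Prop :=
  (forall i, tmax (w i) (tmatvec z i) = q i) /\
  \big[tmax/None]_(i < n) tmul (w i) (z i) = None /\
  (exists j, z j <> None).

Definition colmin (j : 'I_n) : \bar R :=
  \big[Order.min/+oo%E]_(k < n) tdiff (q k) (M k j).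

Definition tnecp_nondegenerate : Prop :=
  forall j : 'I_n, #|[set k : 'I_n | tdiff (q k) (M k j) == colmin j]| = 1%N.

(* Edges of the multigraph G: inl i = blue edge u_i v_i,
   inr (i,j) = red edge u_i v_j (only present when is_edge holds). *)
Definition edge := ('I_n + 'I_n * 'I_n)%type.

Definition is_edge (e : edge) : bool :=
  match e with
  | inl _ => true
  | inr (i, j) => tdiff (q i) (M i j) == colmin j
  end.

Definition is_red (e : edge) : bool := if e is inr _ then true else false.

Definition row_of (e : edge) : 'I_n := match e with inl i => i | inr (i, _) => i end.
Definition col_of (e : edge) : 'I_n := match e with inl i => i | inr (_, j) => j end.

Definition perfect_matching (F : {set edge}) : Prop :=
  (forall e, e \in F -> is_edge e) /\
  (forall i : 'I_n, #|[set e in F | row_of e == i]| = 1%N) /\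
  (forall j : 'I_n, #|[set e in F | col_of e == j]| = 1%N).

Definition alpha_w (F : {set edge}) (i : 'I_n) : trop :=
  if inl i \in F then q i else None.

Definition alpha_z (F : {set edge}) (j : 'I_n) : trop :=
  match [pick i : 'I_n | inr (i, j) \in F] with
  | Some i => tsub (q i) (M i j)
  | None => None
  end.

End Trop.

(* Main.v *)
Require Import Defs.
From HB Require Import structures.
From mathcomp Require Import all_boot all_order all_algebra.
From mathcomp Require Import constructive_ereal.
From mathcomp Require Import lra zify.
Import Order.TTheory GRing.Theory Num.Theory.
Local Open Scope ring_scope.

Set Implicit Arguments. Unset Strict Implicit.


Definition tle (R : realFieldType) (a b : trop R) : bool :=
  match a, b with
  | None, _ => true
  | Some _, None => false
  | Some x, Some y => x <= y
  end.

Arguments tle {R}.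

Lemma tle_trans (R : realFieldType) (a b c : trop R) : tle a b -> tle b c -> tle a c.
Proof. case: a b c => [x|] [y|] [z|] //=; exact: le_trans. Qed.

Lemma tle_refl (R : realFieldType) (a : trop R) : tle a a.
Proof. by case: a => [x|] //=. Qed.

Lemma tmax_ubl (R : realFieldType) (a b : trop R) : tle a (tmax a b).
Proof. by case: a b => [x|] [y|] //=; rewrite ?le_max ?lexx. Qed.

Lemma tmax_ubr (R : realFieldType) (a b : trop R) : tle b (tmax a b).
Proof. by case: a b => [x|] [y|] //=; rewrite ?le_max ?lexx ?orbT. Qed.

Lemma tmax_lub (R : realFieldType) (a b c : trop R) : tle a c -> tle b c -> tle (tmax a b) c.
Proof. by case: a b c => [x|] [y|] [z|] //= h1 h2; rewrite ge_max h1 h2. Qed.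

Lemma tmax_cases (R : realFieldType) (a b : trop R) : tmax a b = a \/ tmax a b = b.
Proof.
case: a b => [x|] [y|] /=; try by [left|right].
by case: (leP x y) => _; [right|left].
Qed.

Lemma tmaxNone (R : realFieldType) (a b : trop R) : tmax a b = None -> a = None /\ b = None.
Proof. by case: a b => [x|] [y|]. Qed.


Lemma tbig_tle (R : realFieldType) (I : eqType) (s : seq I) (f : I -> trop R) j : j \in s -> tle (f j) (\big[@tmax R/None]_(i <- s) f i).
Proof.
elim: s => [|a s' IH] //; rewrite inE big_cons => /orP [/eqP->|/IH h].
  exact: tmax_ubl.
exact: tle_trans h (tmax_ubr _ _).
Qed.

Lemma tbig_lub (R : realFieldType) (I : eqType) (s : seq I) (f : I -> trop R) c : (forall j, j \in s -> tle (f j) c) ->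
  tle (\big[@tmax R/None]_(i <- s) f i) c.
Proof.
elim: s => [|a s' IH] h; rewrite ?big_nil ?big_cons //.
apply: tmax_lub; first by apply: h; rewrite inE eqxx.
by apply: IH => j hj; apply: h; rewrite inE hj orbT.
Qed.

Lemma tbig_att (R : realFieldType) (I : eqType) (s : seq I) (f : I -> trop R) : \big[@tmax R/None]_(i <- s) f i = None \/
   exists2 j, j \in s & \big[@tmax R/None]_(i <- s) f i = f j.
Proof.
elim: s => [|a s' IH]; rewrite ?big_nil ?big_cons; first by left.
case: (tmax_cases (f a) (\big[@tmax R/None]_(i <- s') f i)) => ->.
  by right; exists a; rewrite // inE eqxx.
case: IH => [->|[j hj ->]]; first by left.
by right; exists j; rewrite // inE hj orbT.
Qed.

Lemma tbig_none (R : realFieldType) (I : eqType) (s : seq I) (f : I -> trop R) : (forall j, j \in s -> f j = None) ->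
   \big[@tmax R/None]_(i <- s) f i = None.
Proof.
elim: s => [|a s' IH] h; rewrite ?big_nil ?big_cons //.
rewrite h ?inE ?eqxx //=; apply: IH => j hj; apply: h; by rewrite inE hj orbT.
Qed.

Lemma tbig_none_inv (R : realFieldType) (I : eqType) (s : seq I) (f : I -> trop R) : \big[@tmax R/None]_(i <- s) f i = None ->
   forall j, j \in s -> f j = None.
Proof.
move=> h j /(@tbig_tle _ _ _ f); rewrite h; by case: (f j).
Qed.


Lemma tbigmin_le (R : realFieldType) (I : eqType) (s : seq I) (g : I -> \bar R) j : j \in s -> (\big[Order.min/+oo%E]_(i <- s) g i <= g j)%E.
Proof.
elim: s => [|a s' IH] //; rewrite inE big_cons => /orP [/eqP->|/IH h].
  by rewrite ge_min lexx.
by rewrite ge_min h orbT.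
Qed.

Lemma tbigmin_glb (R : realFieldType) (I : eqType) (s : seq I) (g : I -> \bar R) c : (forall j, j \in s -> (c <= g j)%E) ->
  (c <= \big[Order.min/+oo%E]_(i <- s) g i)%E.
Proof.
elim: s => [|a s' IH] h; rewrite ?big_nil ?big_cons ?leey //.
rewrite le_min h ?inE ?eqxx //= IH // => j hj; apply: h; by rewrite inE hj orbT.
Qed.

Lemma tbigmin_att (R : realFieldType) (I : eqType) (s : seq I) (g : I -> \bar R) : \big[Order.min/+oo%E]_(i <- s) g i = +oo%E \/
   exists2 j, j \in s & \big[Order.min/+oo%E]_(i <- s) g i = g j.
Proof.
elim: s => [|a s' IH]; rewrite ?big_nil ?big_cons; first by left.
rewrite /Order.min; case: ifP => _.
  by right; exists a; rewrite // inE eqxx.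
case: IH => [->|[j hj ->]]; first by left.
by right; exists j; rewrite // inE hj orbT.
Qed.


Lemma tle_anti (R : realFieldType) (x y : trop R) : tle x y -> tle y x -> x = y.
Proof. case: x y => [a|] [b|] //= h1 h2 //; congr Some; apply/eqP; by rewrite eq_le h1 h2. Qed.

Lemma tmax_eq (R : realFieldType) (x y c : trop R) :
  tle x c -> tle y c -> (x = c \/ y = c) -> tmax x y = c.
Proof.
move=> hx hy hc; apply: tle_anti; first exact: tmax_lub.
by case: hc => <-; [exact: tmax_ubl|exact: tmax_ubr].
Qed.

Lemma card1_set (T : finType) (P : pred T) x :
  P x -> (forall y, P y -> y = x) -> #|[set y | P y]| = 1%N.
Proof.
move=> hx hy; apply/eqP/cards1P; exists x; apply/setP => y; rewrite !inE.
by apply/idP/eqP => [/hy|->].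
Qed.

Lemma card1_uniq (T : finType) (P : pred T) x y :
  #|[set y | P y]| = 1%N -> P x -> P y -> x = y.
Proof.
move/eqP/cards1P => [z hz] hx hy.
have : x \in [set y | P y] by rewrite inE.
have : y \in [set y | P y] by rewrite inE.
by rewrite hz !inE => /eqP -> /eqP ->.
Qed.

Lemma card1_ex (T : finType) (P : pred T) :
  #|[set y | P y]| = 1%N -> exists x, P x.
Proof.
move/eqP/cards1P => [z hz]; exists z.
have : z \in [set y | P y] by rewrite hz inE.
by rewrite inE.
Qed.

Lemma colmin_le (R : realFieldType) n (M : 'I_n -> 'I_n -> trop R) q k j :
  (colmin M q j <= tdiff (q k) (M k j))%E.
Proof. exact: (tbigmin_le (fun k => tdiff (q k) (M k j)) (mem_index_enum k)). Qed.

Lemma colmin_glb (R : realFieldType) n (M : 'I_n -> 'I_n -> trop R) q j c :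
  (forall k, c <= tdiff (q k) (M k j))%E -> (c <= colmin M q j)%E.
Proof. move=> h; rewrite /colmin; apply: tbigmin_glb => k _; exact: h. Qed.

Lemma colmin_fin (R : realFieldType) n (M : 'I_n -> 'I_n -> trop R) q :
  (forall j : 'I_n, exists i : 'I_n, M i j <> None) ->
  (forall i : 'I_n, q i <> None) ->
  forall j, exists c : R, colmin M q j = c%:E.
Proof.
move=> HM Hq j; have [i0 Hi0] := HM j.
have : (colmin M q j <= tdiff (q i0) (M i0 j))%E by apply: colmin_le.
case E0: (M i0 j) Hi0 => [m|] // _; case Eq: (q i0) (Hq i0) => [a|] // _ /= hle.
case: (tbigmin_att (index_enum 'I_n) (fun k => tdiff (q k) (M k j))) => [h|[k _ h]].
  by move: hle; rewrite /colmin h leNgt ltey.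
move: hle; rewrite /colmin h.
case: (M k j) => [m'|]; case Eqk: (q k) (Hq k) => [b|] //= _; first by exists (b - m').
Qed.

Lemma red_edge (R : realFieldType) n (M : 'I_n -> 'I_n -> trop R) q :
  (forall j : 'I_n, exists i : 'I_n, M i j <> None) ->
  (forall i : 'I_n, q i <> None) ->
  forall i j, is_edge M q (inr (i, j)) ->
  exists a m, [/\ q i = Some a, M i j = Some m & colmin M q j = (a - m)%:E].
Proof.
move=> HM Hq i j /=; have [c hc] := colmin_fin HM Hq j; rewrite hc.
case Eq: (q i) (Hq i) => [a|] // _; case: (M i j) => [m|] //= /eqP [h].
by exists a, m; rewrite h.
Qed.

Lemma pm_row (R : realFieldType) n (M : 'I_n -> 'I_n -> trop R) q F :
  perfect_matching M q F -> forall i,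
  (exists e, e \in F /\ row_of e = i) /\
  (forall e1 e2, e1 \in F -> e2 \in F -> row_of e1 = i -> row_of e2 = i -> e1 = e2).
Proof.
move=> [_ [Hr _]] i; have := Hr i; move=> h; split.
  by have [e /andP [he /eqP <-]] := card1_ex h; exists e.
move=> e1 e2 h1 h2 r1 r2; apply: (card1_uniq h); by rewrite ?h1 ?h2 ?r1 ?r2 /= eqxx.
Qed.

Lemma pm_col (R : realFieldType) n (M : 'I_n -> 'I_n -> trop R) q F :
  perfect_matching M q F -> forall j,
  (exists e, e \in F /\ col_of e = j) /\
  (forall e1 e2, e1 \in F -> e2 \in F -> col_of e1 = j -> col_of e2 = j -> e1 = e2).
Proof.
move=> [_ [_ Hc]] i; have := Hc i; move=> h; split.
  by have [e /andP [he /eqP <-]] := card1_ex h; exists e.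
move=> e1 e2 h1 h2 r1 r2; apply: (card1_uniq h); by rewrite ?h1 ?h2 ?r1 ?r2 /= eqxx.
Qed.

Lemma alpha_z_red (R : realFieldType) n (M : 'I_n -> 'I_n -> trop R) q F i j :
  perfect_matching M q F -> inr (i, j) \in F ->
  alpha_z M q F j = tsub (q i) (M i j).
Proof.
move=> HF hij; rewrite /alpha_z; case: pickP => [i' hi'|hn]; last by rewrite hn in hij.
have [_ u] := pm_col HF j.
by have [->] : inr (i', j) = inr (i, j) :> edge n by apply: u.
Qed.

Lemma alpha_z_nored (R : realFieldType) n (M : 'I_n -> 'I_n -> trop R) q (F : {set edge n}) j :
  (forall i, inr (i, j) \notin F) -> alpha_z M q F j = None.
Proof.
move=> h; rewrite /alpha_z; case: pickP => [i' hi'|//].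
by move: (h i'); rewrite hi'.
Qed.

Lemma alpha_z_cases (R : realFieldType) n (M : 'I_n -> 'I_n -> trop R) q (F : {set edge n}) j :
  alpha_z M q F j = None \/
  exists i, inr (i, j) \in F /\ alpha_z M q F j = tsub (q i) (M i j).
Proof.
rewrite /alpha_z; case: pickP => [i' hi'|_]; last by left.
by right; exists i'.
Qed.

Lemma part1 (R : realFieldType) (n : nat)
  (M : 'I_n -> 'I_n -> trop R) (q : 'I_n -> trop R) :
  (forall j : 'I_n, exists i : 'I_n, M i j <> None) ->
  (forall i : 'I_n, q i <> None) ->
  (forall F : {set edge n},
     perfect_matching M q F ->
     (exists e, e \in F /\ is_red e) ->
     is_solution M q (alpha_w q F) (alpha_z M q F)).
Proof.
move=> HM Hq F HF [e0 [he0 hred]].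
have Hedge := HF.1.
split; [|split].
- move=> i; case Eq: (q i) (Hq i) => [a|] // _.
  apply: tmax_eq.
  + by rewrite /alpha_w; case: ifP => _ //; rewrite Eq /= lexx.
  + apply: tbig_lub => j _.
    case: (alpha_z_cases M q F j) => [->|[k [hk ->]]]; first by case: (M i j).
    have [b [m [Eb Em Ec]]] := red_edge HM Hq (Hedge _ hk).
    rewrite Eb Em /=; case Emi: (M i j) => [m'|] //=.
    have := colmin_le M q i j; rewrite Ec Eq Emi /= lee_fin => hle.
    lra.
  + have [[e [he hr]] _] := pm_row HF i.
    case: e he hr => [i'|[i' j]] he /= hr; subst i'.
      by left; rewrite /alpha_w he.
    right; apply: tle_anti.
      apply: tbig_lub => j' _.
      case: (alpha_z_cases M q F j') => [->|[k [hk ->]]]; first by case: (M i j').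
      have [b [m [Eb Em Ec]]] := red_edge HM Hq (Hedge _ hk).
      rewrite Eb Em /=; case Emi: (M i j') => [m'|] //=.
      have := colmin_le M q i j'; rewrite Ec Eq Emi /= lee_fin => hle.
      lra.
    apply: tle_trans (tbig_tle _ (mem_index_enum j)).
    rewrite (alpha_z_red HF he).
    have [b [m [Eb Em Ec]]] := red_edge HM Hq (Hedge _ he).
    rewrite Eq Em /=; lra.
- apply: tbig_none => i _; rewrite /alpha_w; case: ifP => // hb.
  rewrite alpha_z_nored; first by case: (q i).
  move=> k; apply/negP => hk.
  have [_ u] := pm_col HF i.
  by have := u _ _ hk hb erefl erefl.
- case: e0 he0 hred => [//|[i j]] he _; exists j.
  rewrite (alpha_z_red HF he).
  have [b [m [Eb Em Ec]]] := red_edge HM Hq (Hedge _ he).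
  by rewrite Eb Em.
Qed.

Lemma part2 (R : realFieldType) (n : nat)
  (M : 'I_n -> 'I_n -> trop R) (q : 'I_n -> trop R) :
  (forall j : 'I_n, exists i : 'I_n, M i j <> None) ->
  (forall i : 'I_n, q i <> None) ->
  (tnecp_nondegenerate M q ->
   forall w z : 'I_n -> trop R, is_solution M q w z ->
   exists F : {set edge n},
     [/\ perfect_matching M q F,
         (exists e, e \in F /\ is_red e),
         (forall i, w i = alpha_w q F i) &
         (forall j, z j = alpha_z M q F j)]).
Proof.
move=> HM Hq ND w z [Hr [Hc [j0 Hj0]]].
pose T i j := tmul (M i j) (z j) == q i.
have Ha : forall i j, tle (tmul (M i j) (z j)) (q i).
  move=> i j; rewrite -Hr; apply: tle_trans (tmax_ubr _ _).
  rewrite /tmatvec; exact: (tbig_tle (fun j => tmul (M i j) (z j)) (mem_index_enum j)).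
have Hcomp : forall i, tmul (w i) (z i) = None.
  move=> i; exact: (tbig_none_inv Hc (mem_index_enum i)).
have Hzle : forall j c, z j = Some c -> (c%:E <= colmin M q j)%E.
  move=> j c Ez; apply: colmin_glb => k.
  case Eq: (q k) (Hq k) => [a|] // _.
  case Em: (M k j) => [m|] /=; last exact: leey.
  have := Ha k j; rewrite Ez Eq Em /= lee_fin => h; lra.
have HT : forall i j, T i j -> exists a m c,
    [/\ q i = Some a, M i j = Some m, z j = Some c & m + c = a].
  move=> i j; rewrite /T; case Eq: (q i) (Hq i) => [a|] // _.
  case Em: (M i j) => [m|] //=; case Ez: (z j) => [c|] //= /eqP [h].
  by exists a, m, c.
have HTedge : forall i j, T i j -> tdiff (q i) (M i j) == colmin M q j.
  move=> i j /HT [a [m [c [Eq Em Ez Ea]]]].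
  have h1 := Hzle j c Ez; have h2 := colmin_le M q i j.
  move: h2; rewrite Eq Em /= => h2.
  rewrite eq_le h2 andbT; apply: le_trans h1; rewrite lee_fin; lra.
pose am j := odflt j [pick k | tdiff (q k) (M k j) == colmin M q j].
have HTa : forall i j, T i j -> i = am j.
  move=> i j hT; have he := HTedge _ _ hT.
  rewrite /am; case: pickP => [k hk|hn]; last by rewrite hn in he.
  exact: (card1_uniq (ND j) he hk).
pose B := [set i | w i != None].
pose Z := [set j | z j != None].
pose Img := [set i | [exists j, T i j]].
have HTz : forall i j, T i j -> j \in Z.
  by move=> i j /HT [a [m [c [_ _ Ez _]]]]; rewrite inE Ez.
have Hdisj : forall i, i \in B -> i \in Z -> False.
  move=> i; rewrite !inE; have := Hcomp i.
  by case: (w i) => [x|]; case: (z i) => [y|].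
have Hatt : forall i, tmatvec M z i = q i -> exists j, T i j.
  move=> i ht.
  case: (tbig_att (index_enum 'I_n) (fun j => tmul (M i j) (z j))) => [h|[j _ h]].
    by exfalso; apply: (Hq i); rewrite -ht /tmatvec h.
  by exists j; rewrite /T -h -ht.
have Hcov : forall i, (i \in B) || (i \in Img).
  move=> i; rewrite !inE; case Ew: (w i) => [x|] //=.
  have := Hr i; rewrite Ew /= => /Hatt [j hj].
  by apply/existsP; exists j.
have HImg : Img \subset [set am j | j in Z].
  apply/subsetP => i; rewrite inE => /existsP [j hT]; rewrite (HTa _ _ hT).
  apply: imset_f; exact: HTz hT.
have c1 : #|B :|: Img| = n.
  have -> : B :|: Img = setT by apply/setP => i; rewrite in_setU in_setT Hcov.
  by rewrite cardsT card_ord.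
have c2 : (#|B :|: Z| <= n)%N by rewrite -[X in (_ <= X)%N]card_ord; apply: max_card.
have c3 : #|B :&: Z| = 0%N.
  apply/eqP; rewrite cards_eq0; apply/eqP/setP => i; rewrite inE in_set0.
  by apply/negP => /andP [h1 h2]; exact: Hdisj h1 h2.
have c4 := cardsU B Z.
have c5 := cardsU B Img.
have c6 : (#|B :&: Img| <= #|B|)%N := subset_leq_card (subsetIl B Img).
have c7 : (#|Img| <= #|[set am j | j in Z]|)%N := subset_leq_card HImg.
have c8 : (#|[set am j | j in Z]| <= #|Z|)%N := leq_imset_card am _.
have e1 : #|B :&: Img| = 0%N by lia.
have e2 : #|[set am j | j in Z]| = #|Z| by lia.
have e3 : #|Img| = #|[set am j | j in Z]| by lia.
have e4 : #|B :|: Z| = n by lia.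
have Hinj : {in Z &, injective am} by apply/imset_injP; rewrite e2.
have HImgeq : Img = [set am j | j in Z].
  by apply/eqP; rewrite eqEcard HImg e3 leqnn.
have HBZ : forall j, (j \in B) || (j \in Z).
  have hs : B :|: Z = setT.
    by apply/eqP; rewrite eqEcard subsetT cardsT card_ord e4 leqnn.
  by move=> j; rewrite -in_setU hs in_setT.
have HBI : forall i, i \in B -> i \in Img -> False.
  have hs : B :&: Img = set0 by apply/eqP; rewrite -cards_eq0 e1.
  by move=> i h1 h2; have := in_set0 i; rewrite -hs in_setI h1 h2.
have KZ : forall j, j \in Z -> T (am j) j.
  move=> j hj; have : am j \in Img by rewrite HImgeq imset_f.
  rewrite inE => /existsP [j' hT].
  have e := HTa _ _ hT; have hj' := HTz _ _ hT.
  have ej := Hinj j' j hj' hj (esym e); subst j'; exact: hT.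
have KT2 : forall i j j', T i j -> T i j' -> j = j'.
  move=> i j j' h h'; apply: Hinj; [exact: HTz h|exact: HTz h'|].
  by rewrite -(HTa _ _ h) -(HTa _ _ h').
have Kw : forall i, w i != None -> w i = q i.
  move=> i hw; have hB : i \in B by rewrite inE.
  have := Hr i; case: (tmax_cases (w i) (tmatvec M z i)) => -> // /Hatt [j hj].
  by exfalso; apply: (HBI i hB); rewrite inE; apply/existsP; exists j.
pose F : {set edge n} := [set e : edge n | match e with
   | inl i => w i != None | inr ij => tmul (M ij.1 ij.2) (z ij.2) == q ij.1 end].
have inFl : forall i, (inl i \in F) = (w i != None) by move=> i; rewrite inE.
have inFr : forall i j, (inr (i, j) \in F) = T i j by move=> i j; rewrite inE.
exists F; split.
- split; [|split].
  + by case=> [i|[i j]] //=; rewrite inFr => hT; exact: HTedge _ _ hT.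
  + move=> i; case Ew: (w i) => [x|].
      apply: (@card1_set _ _ (inl i)); first by rewrite /= inFl Ew eqxx.
      case=> [i'|[i' j]] /andP [hin /eqP hr] /=; simpl in hr; subst i' => //.
      rewrite inFr in hin; exfalso; apply: (HBI i); first by rewrite inE Ew.
      by rewrite inE; apply/existsP; exists j.
    have : i \in Img by have := Hcov i; rewrite inE Ew.
    rewrite inE => /existsP [j hj].
    apply: (@card1_set _ _ (inr (i, j))); first by rewrite /= inFr hj eqxx.
    case=> [i'|[i' j']] /andP [hin /eqP hr] /=; simpl in hr; subst i'.
      by rewrite inFl Ew in hin.
    by rewrite inFr in hin; rewrite (KT2 _ _ _ hin hj).
  + move=> j; case Ew: (w j) => [x|].
      apply: (@card1_set _ _ (inl j)); first by rewrite /= inFl Ew eqxx.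
      case=> [j'|[i' j']] /andP [hin /eqP hr] /=; simpl in hr; subst j' => //.
      rewrite inFr in hin; exfalso; apply: (Hdisj j); first by rewrite inE Ew.
      exact: HTz hin.
    have hZ : j \in Z by have := HBZ j; rewrite inE Ew.
    apply: (@card1_set _ _ (inr (am j, j))); first by rewrite /= inFr KZ // eqxx.
    case=> [j'|[i' j']] /andP [hin /eqP hr] /=; simpl in hr; subst j'.
      by rewrite inFl Ew in hin.
    by rewrite inFr in hin; rewrite -(HTa _ _ hin).
- exists (inr (am j0, j0)); split => //; rewrite inFr; apply: KZ.
  by rewrite inE; apply/eqP.
- move=> i; rewrite /alpha_w inFl; case: ifP => [h|/negbFE/eqP //]; exact: Kw.
- move=> j; rewrite /alpha_z; case: pickP => [i hi|hn].
    rewrite inFr in hi; have [a [m [c [Eq Em Ez Ea]]]] := HT _ _ hi.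
    rewrite Eq Em Ez /=; congr Some; lra.
  case Ez: (z j) => [c|] //; exfalso.
  have hZ : j \in Z by rewrite inE Ez.
  by move: (hn (am j)); rewrite /= inFr KZ.
Qed.

Unset Implicit Arguments. Set Strict Implicit.

Theorem lemma3p2 (R : realFieldType) (n : nat)
  (M : 'I_n -> 'I_n -> trop R) (q : 'I_n -> trop R) :
  (forall j : 'I_n, exists i : 'I_n, M i j <> None) ->
  (forall i : 'I_n, q i <> None) ->
  (forall F : {set edge n},
     perfect_matching M q F ->
     (exists e, e \in F /\ is_red e) ->
     is_solution M q (alpha_w q F) (alpha_z M q F)) /\
  (tnecp_nondegenerate M q ->
   forall w z : 'I_n -> trop R, is_solution M q w z ->
   exists F : {set edge n},
     [/\ perfect_matching M q F,
         (exists e, e \in F /\ is_red e),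
         (forall i, w i = alpha_w q F i) &
         (forall j, z j = alpha_z M q F j)]).
Proof.
move=> HM Hq; split; [exact: part1 | exact: part2].
Qed.
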